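(* For every $u_0\in\mathbb{R}$ there exist $\delta>0$ and a unique function $u\in C^2([0,\delta))$ with $u(0)=u_0$, $u'(0)=0$, solving $$\frac{d}{d\theta}\left(\frac{\sin\theta\,u'}{(1+u'^2)^2}\right)=\sin\theta\,\frac{u'^2-1}{(1+u'^2)^2}\qquad\text{for }\theta\in(0,\delta).$$ Moreover $u''(0)=-\tfrac12$, $u$ is strictly concave on $[0,\delta)$, and $u(\theta)=u_0-\tfrac14\theta^2+O(\theta^4)$ as $\theta\to0$.
   Context: The displayed ODE is the Euler–Lagrange equation of $R_2[u]=\int\frac{e^{-2u}}{1+|\nabla_{\mathbb{S}^2}u|^2}\,d\Omega$ restricted to rotationally symmetric functions $u=u(\theta)$, where $\theta$ is the colatitude on $\mathbb{S}^2$ (so $\theta=0$ is the pole on the rotation axis). *)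

(* Defs.v *)
From Stdlib Require Import Reals.
From Coquelicot Require Import Coquelicot.
Open Scope R_scope.

Definition has_deriv_on_Ico (d : R) (f f' : R -> R) : Prop :=
  forall x, 0 <= x < d ->
    filterlim (fun h => (f (x + h) - f x) / h)
      (within (fun h => h <> 0 /\ 0 <= x + h < d) (locally 0))
      (locally (f' x)).

Definition continuous_on_Ico (d : R) (g : R -> R) : Prop :=
  forall x, 0 <= x < d ->
    filterlim g (within (fun y => 0 <= y < d) (locally x)) (locally (g x)).

Definition C2_Ico (d : R) (u u1 u2 : R -> R) : Prop :=
  has_deriv_on_Ico d u u1 /\ has_deriv_on_Ico d u1 u2 /\ continuous_on_Ico d u2.

Definition ode_on (d : R) (u1 : R -> R) : Prop :=
  forall t, 0 < t < d ->
    is_derive (fun s => sin s * u1 s / (1 + (u1 s) ^ 2) ^ 2) t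
              (sin t * ((u1 t) ^ 2 - 1) / (1 + (u1 t) ^ 2) ^ 2).

Definition is_solution (u0 d : R) (u : R -> R) : Prop :=
  exists u1 u2 : R -> R,
    C2_Ico d u u1 u2 /\ u 0 = u0 /\ u1 0 = 0 /\ ode_on d u1.

(* Main.v *)
Require Import Defs.
From Stdlib Require Import Reals Lra Psatz.
From Coquelicot Require Import Coquelicot.
Open Scope R_scope.

Lemma ballR x e y : ball x e y <-> Rabs (y - x) < e.
Proof. unfold ball; simpl; unfold AbsRing_ball; simpl. unfold abs, minus, plus, opp; simpl. tauto. Qed.

Definition cont (f : R -> R) := forall x, continuity_pt f x.

Lemma cont_continuous f x : continuity_pt f x -> continuous f x.
Proof. intro H. apply continuity_pt_filterlim in H. exact H. Qed.

Lemma lip_cont (f : R -> R) K : 0 <= K -> (forall x y, Rabs (f x - f y) <= K * Rabs (x - y)) -> cont f.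
Proof.
  intros HK H x. intros e He. exists (e / (K + 1)). split.
  - apply Rdiv_lt_0_compat; lra.
  - intros y [_ Hy]. simpl in *. unfold R_dist in *.
    eapply Rle_lt_trans. apply H.
    apply Rle_lt_trans with (K * (e / (K+1))).
    apply Rmult_le_compat_l; lra.
    apply Rlt_le_trans with ((K+1) * (e/(K+1))).
    apply Rmult_lt_compat_r. apply Rdiv_lt_0_compat; lra. lra.
    right. field. lra.
Qed.

Definition dl : R := /100.
Definition clip (x : R) : R := Rmax 0 (Rmin dl x).
Definition cl (x : R) : R := Rmax (-/2) (Rmin (/2) x).

Lemma clip_lip x y : Rabs (clip x - clip y) <= 1 * Rabs (x - y).
Proof. unfold clip, dl, Rmax, Rmin. repeat destruct Rle_dec; split_Rabs; lra. Qed.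
Lemma cl_lip x y : Rabs (cl x - cl y) <= 1 * Rabs (x - y).
Proof. unfold cl, Rmax, Rmin. repeat destruct Rle_dec; split_Rabs; lra. Qed.
Lemma clip_cont : cont clip. Proof. apply (lip_cont _ 1); [lra|apply clip_lip]. Qed.
Lemma cl_cont : cont cl. Proof. apply (lip_cont _ 1); [lra|apply cl_lip]. Qed.
Lemma clip_range x : 0 <= clip x <= dl.
Proof. unfold clip, dl, Rmax, Rmin. repeat destruct Rle_dec; lra. Qed.
Lemma clip_id x : 0 <= x <= dl -> clip x = x.
Proof. unfold clip, dl, Rmax, Rmin. repeat destruct Rle_dec; lra. Qed.
Lemma clip_idem x : clip (clip x) = clip x.
Proof. apply clip_id, clip_range. Qed.
Lemma cl_id x : Rabs x <= /2 -> cl x = x.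
Proof. unfold cl, Rmax, Rmin. repeat destruct Rle_dec; split_Rabs; lra. Qed.
Lemma cl_range x : Rabs (cl x) <= /2.
Proof. unfold cl, Rmax, Rmin. repeat destruct Rle_dec; split_Rabs; lra. Qed.

Lemma sin_lo t : 0 <= t <= 1 -> t - t^3/6 <= sin t.
Proof. intros Ht. pose proof PI2_3_2 as HPI. destruct (sin_bound t 0) as [H _]; try lra.
  replace (sin_approx t (2*0+1)) with (t - t^3/6) in H. lra. unfold sin_approx, sin_term; simpl; field. Qed.
Lemma sin_hi t : 0 <= t -> sin t <= t.
Proof. intros Ht. destruct (Req_dec t 0). subst; rewrite sin_0; lra. left; apply sin_lt_x; lra. Qed.
Lemma cos_lo t : 0 <= t <= 1 -> 1 - t^2/2 <= cos t.
Proof. intros Ht. pose proof PI2_3_2 as HPI. destruct (cos_bound t 0) as [H _]; try lra.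
  replace (cos_approx t (2*0+1)) with (1 - t^2/2) in H. lra. unfold cos_approx, cos_term; simpl; field. Qed.
Lemma cos_hi t : 0 <= t <= 1 -> cos t <= 1 - t^2/2 + t^4/24.
Proof. intros Ht. pose proof PI2_3_2 as HPI. destruct (cos_bound t 0) as [_ H]; try lra.
  replace (cos_approx t (2*(0+1))) with (1 - t^2/2 + t^4/24) in H. lra. unfold cos_approx, cos_term; simpl; field. Qed.
Lemma PI_gt1 : 1 < PI. Proof. pose proof PI2_3_2 as HPI. lra. Qed.

Definition Er (y : R) : R := (y^4 - 1) / (1 - 3*y^2).
Definition Dr (y : R) : R := 4*y^3 / (1 - 3*y^2).
Definition E (x : R) : R := Er (cl x).
Definition D (x : R) : R := Dr (cl x).

Lemma abs_small a r : Rabs a <= r -> a^2 <= r^2.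
Proof. intros. split_Rabs; nra. Qed.

Lemma Rabs_le_mult_bound (q K x : R) : Rabs q <= K -> Rabs (x * q) <= K * Rabs x.
Proof. intros. rewrite Rabs_mult. rewrite Rmult_comm. apply Rmult_le_compat_r; [apply Rabs_pos|lra]. Qed.

Lemma Er_near a : Rabs a <= /50 -> Rabs (Er a + 1) <= 4 * a^2.
Proof.
  intros Ha. pose proof (abs_small _ _ Ha). unfold Er.
  replace ((a ^ 4 - 1) / (1 - 3 * a ^ 2) + 1) with (a^2 * ((a^2 - 3)/(1-3*a^2))) by (field; nra).
  rewrite Rmult_comm. rewrite Rabs_mult. rewrite (Rabs_right (a^2)) by nra.
  apply Rmult_le_compat_r. nra.
  rewrite Rabs_div by nra. rewrite (Rabs_left1 (a^2-3)) by nra. rewrite (Rabs_right (1-3*a^2)) by nra.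
  apply Rle_div_l; nra.
Qed.

Lemma Dr_small a : Rabs a <= /50 -> Rabs (Dr a) <= 5 * Rabs a ^ 3.
Proof.
  intros Ha. pose proof (abs_small _ _ Ha). unfold Dr.
  rewrite Rabs_div by nra. rewrite (Rabs_right (1-3*a^2)) by nra.
  apply Rle_div_l. nra. rewrite Rabs_mult, <- RPow_abs. rewrite (Rabs_right 4) by lra.
  assert (0 <= Rabs a ^ 3) by (apply pow_le, Rabs_pos).
  assert (4/5 <= 1 - 3*a^2) by nra.
  apply Rle_trans with (5 * Rabs a ^ 3 * (4/5)). lra. apply Rmult_le_compat_l; lra.
Qed.

Lemma Er_lip a b : Rabs a <= /50 -> Rabs b <= /50 -> Rabs (Er a - Er b) <= /5 * Rabs (a - b).
Proof.
  intros Ha Hb. pose proof (abs_small _ _ Ha). pose proof (abs_small _ _ Hb). unfold Er.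
  replace ((a ^ 4 - 1) / (1 - 3 * a ^ 2) - (b ^ 4 - 1) / (1 - 3 * b ^ 2))
    with ((a - b) * ((a+b) * (a^2+b^2-3*a^2*b^2-3) / ((1-3*a^2)*(1-3*b^2)))) by (field; nra).
  apply Rabs_le_mult_bound.
  assert (Rabs (a+b) <= /25) by (split_Rabs; lra).
  rewrite Rabs_div by nra. rewrite Rabs_mult.
  rewrite (Rabs_left1 (a ^ 2 + b ^ 2 - 3 * a ^ 2 * b ^ 2 - 3)) by nra.
  rewrite (Rabs_right ((1 - 3 * a ^ 2) * (1 - 3 * b ^ 2))) by nra.
  apply Rle_div_l. nra.
  assert (0 <= Rabs (a+b)) by apply Rabs_pos. nra.
Qed.

Lemma Dr_lip a b : Rabs a <= /50 -> Rabs b <= /50 -> Rabs (Dr a - Dr b) <= /100 * Rabs (a - b).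
Proof.
  intros Ha Hb. pose proof (abs_small _ _ Ha). pose proof (abs_small _ _ Hb). unfold Dr.
  replace (4 * a ^ 3 / (1 - 3 * a ^ 2) - 4 * b ^ 3 / (1 - 3 * b ^ 2))
    with ((a - b) * (4*(a^2+a*b+b^2-3*a^2*b^2) / ((1-3*a^2)*(1-3*b^2)))) by (field; nra).
  apply Rabs_le_mult_bound.
  assert (Rabs (a*b) <= /2500) by (rewrite Rabs_mult; assert (0<=Rabs a) by apply Rabs_pos; assert (0<=Rabs b) by apply Rabs_pos; nra).
  rewrite Rabs_div by nra.
  rewrite (Rabs_right ((1 - 3 * a ^ 2) * (1 - 3 * b ^ 2))) by nra.
  apply Rle_div_l. nra.
  assert (a*b <= /2500 /\ -/2500 <= a*b) by (split_Rabs; lra).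
  assert (0 <= a^2*b^2) by nra.
  assert (a^2*b^2 <= /2500 * /2500) by (replace (a^2*b^2) with ((a*b)*(a*b)) by ring; nra).
  assert (0 <= a^2 + a*b + b^2) by nra.
  assert ((1 - 3/2500) * (1 - 3/2500) <= (1 - 3 * a ^ 2) * (1 - 3 * b ^ 2)) by nra.
  rewrite Rabs_right by nra. nra.
Qed.

Lemma E_eq a : Rabs a <= /50 -> E a = Er a.
Proof. intros. unfold E. rewrite cl_id; auto. lra. Qed.
Lemma D_eq a : Rabs a <= /50 -> D a = Dr a.
Proof. intros. unfold D. rewrite cl_id; auto. lra. Qed.

Lemma Er_cont y : Rabs y <= /2 -> continuity_pt Er y.
Proof.
  intros Hy. pose proof (abs_small _ _ Hy). unfold Er.
  apply (continuity_pt_div (fun y => y^4 - 1) (fun y => 1 - 3*y^2)).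
  - apply continuity_pt_minus. apply derivable_continuous_pt, derivable_pt_pow. apply continuity_pt_const. intros u v; auto.
  - apply continuity_pt_minus. apply continuity_pt_const. intros u v; auto.
    apply continuity_pt_scal. apply derivable_continuous_pt, derivable_pt_pow.
  - nra.
Qed.
Lemma Dr_cont y : Rabs y <= /2 -> continuity_pt Dr y.
Proof.
  intros Hy. pose proof (abs_small _ _ Hy). unfold Dr.
  apply (continuity_pt_div (fun y => 4*y^3) (fun y => 1 - 3*y^2)).
  - apply continuity_pt_scal. apply derivable_continuous_pt, derivable_pt_pow.
  - apply continuity_pt_minus. apply continuity_pt_const. intros u v; auto.
    apply continuity_pt_scal. apply derivable_continuous_pt, derivable_pt_pow.
  - nra.
Qed.
Lemma E_cont : cont E.
Proof. intro x. unfold E. apply (continuity_pt_comp cl Er). apply cl_cont. apply Er_cont, cl_range. Qed.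
Lemma D_cont : cont D.
Proof. intro x. unfold D. apply (continuity_pt_comp cl Dr). apply cl_cont. apply Dr_cont, cl_range. Qed.

Lemma ex_cont f a b : cont f -> ex_RInt f a b.
Proof. intros H. apply (ex_RInt_continuous (V := R_CompleteNormedModule)). intros z _. apply cont_continuous, H. Qed.

Lemma RInt_deriv f x : cont f -> is_derive (RInt f 0) x (f x).
Proof.
  intros H. apply is_derive_RInt with (a := 0).
  - exists (mkposreal 1 Rlt_0_1). intros y _. apply RInt_correct, ex_cont, H.
  - apply cont_continuous, H.
Qed.

Lemma RInt_cont f : cont f -> cont (RInt f 0).
Proof.
  intros H x. apply derivable_continuous_pt. exists (f x).
  apply is_derive_Reals, RInt_deriv, H.
Qed.

Lemma RInt_bound g th M : cont g -> 0 <= th -> (forall s, 0 <= s <= th -> Rabs (g s) <= M) ->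
  Rabs (RInt g 0 th) <= th * M.
Proof.
  intros Hg Hth HM.
  eapply Rle_trans. apply abs_RInt_le; auto. apply ex_cont, Hg.
  eapply Rle_trans. apply RInt_le with (g := fun _ => M); auto.
  - apply ex_cont. intro x. apply (continuity_pt_comp g Rabs). apply Hg. apply Rcontinuity_abs.
  - apply ex_cont. intro; apply continuity_pt_const. intros u v; auto.
  - intros x Hx. apply HM; lra.
  - rewrite RInt_const. unfold scal; simpl; unfold mult; simpl. lra.
Qed.

Lemma cont_plus f g : cont f -> cont g -> cont (fun x => f x + g x).
Proof. intros Hf Hg x. apply (continuity_pt_plus f g); auto. Qed.
Lemma cont_minus f g : cont f -> cont g -> cont (fun x => f x - g x).
Proof. intros Hf Hg x. apply (continuity_pt_minus f g); auto. Qed.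
Lemma cont_mult f g : cont f -> cont g -> cont (fun x => f x * g x).
Proof. intros Hf Hg x. apply (continuity_pt_mult f g); auto. Qed.
Lemma cont_comp f g : cont f -> cont g -> cont (fun x => g (f x)).
Proof. intros Hf Hg x. apply (continuity_pt_comp f g); auto. Qed.
Lemma cont_sin : cont sin. Proof. intro x; apply continuity_sin. Qed.
Lemma cont_cos : cont cos. Proof. intro x; apply continuity_cos. Qed.

Definition fp (p : R -> R) (s : R) : R := sin s * E (p s) - cos s * D (p s).
Definition Sop (p : R -> R) (th : R) : R := RInt (fp p) 0 th / sin th.
Definition T (p : R -> R) (x : R) : R := Sop p (clip x).
Definition Inv (p : R -> R) : Prop := cont p /\ forall th, 0 <= th <= dl -> Rabs (p th) <= 2 * th.

Lemma fp_cont p : cont p -> cont (fp p).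
Proof.
  intros Hp. unfold fp. apply cont_minus; apply cont_mult.
  apply cont_sin. apply cont_comp; auto; apply E_cont.
  apply cont_cos. apply cont_comp; auto; apply D_cont.
Qed.

Lemma dl_pos : 0 < dl. Proof. unfold dl; lra. Qed.

Lemma sin_pos_dl th : 0 < th <= dl -> th - th^3/6 <= sin th /\ 0 < sin th /\ sin th <= th.
Proof.
  intros H. unfold dl in H. pose proof (sin_lo th). pose proof (sin_hi th).
  assert (A1: th - th^3/6 <= sin th) by (apply H0; lra).
  assert (A2: sin th <= th) by (apply H1; lra).
  assert (th - th^3/6 > 0) by nra. lra.
Qed.

Lemma Inv_small p s : Inv p -> 0 <= s <= dl -> Rabs (p s) <= /50.
Proof. intros [_ H] Hs. specialize (H s Hs). unfold dl in *. lra. Qed.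

Lemma fp_bound p s : Inv p -> 0 <= s <= dl -> Rabs (fp p s) <= s + 56 * s^3.
Proof.
  intros Hp Hs. pose proof (Inv_small p s Hp Hs) as Hps. pose proof (proj2 Hp s Hs) as H2.
  unfold fp. rewrite E_eq, D_eq by auto.
  pose proof (Er_near _ Hps). pose proof (Dr_small _ Hps).
  destruct (Req_dec s 0) as [->|Hs0].
  { rewrite sin_0. assert (p 0 = 0) by (split_Rabs; lra). rewrite H1.
    unfold Dr. replace (4 * 0 ^ 3 / (1 - 3 * 0 ^ 2)) with 0 by (field). rewrite Rmult_0_r, Rmult_0_l, Rminus_0_r, Rabs_R0. lra. }
  destruct (sin_pos_dl s) as [_ [Hsp Hsh]]. lra.
  assert (Rabs (Er (p s)) <= 1 + 16 * s^2).
  { assert ((p s)^2 <= 4 * s^2). { assert (0 <= s) by lra. split_Rabs; nra. }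
    split_Rabs; nra. }
  assert (Rabs (p s) ^ 3 <= 8 * s^3).
  { replace (8 * s^3) with ((2*s)^3) by ring. apply pow_incr. split; [apply Rabs_pos|lra]. }
  assert (Rabs (cos s) <= 1) by (pose proof (COS_bound s); split_Rabs; lra).
  eapply Rle_trans. apply Rabs_triang. rewrite Rabs_Ropp, !Rabs_mult.
  rewrite (Rabs_right (sin s)) by lra.
  assert (0 <= Rabs (Er (p s))) by apply Rabs_pos. assert (0 <= Rabs (Dr (p s))) by apply Rabs_pos.
  assert (sin s * Rabs (Er (p s)) <= s * (1 + 16 * s^2)) by (apply Rmult_le_compat; lra).
  assert (Rabs (cos s) * Rabs (Dr (p s)) <= 1 * (5 * (8 * s^3))).
  { apply Rmult_le_compat; try lra; apply Rabs_pos. }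
  lra.
Qed.

Lemma Sop_0 p : Sop p 0 = 0.
Proof. unfold Sop. rewrite RInt_point. unfold zero; simpl. lra. Qed.

Lemma div_bound a s b : 0 < s -> Rabs a <= b * s -> Rabs (a / s) <= b.
Proof. intros Hs H. rewrite Rabs_div by lra. rewrite (Rabs_right s) by lra. apply Rle_div_l; lra. Qed.

Lemma Sop_bound p th : Inv p -> 0 <= th <= dl -> Rabs (Sop p th) <= 2 * th.
Proof.
  intros Hp Hth. destruct (Req_dec th 0) as [->|H0]. rewrite Sop_0, Rabs_R0; lra.
  destruct (sin_pos_dl th) as [Hs1 [Hs2 Hs3]]. lra.
  unfold Sop. apply div_bound; auto.
  eapply Rle_trans. apply RInt_bound with (M := th + 56 * th^3). apply fp_cont, Hp. lra.
  intros s Hs. eapply Rle_trans. apply fp_bound; auto. unfold dl in *; lra.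
  assert (s^3 <= th^3) by (apply pow_incr; lra). lra.
  unfold dl in *. assert (th^2 <= /10000) by nra.
  assert (0 < th) by lra.
  replace (th * (th + 56 * th ^ 3)) with (th * th * (1 + 56 * th^2)) by ring.
  apply Rle_trans with (2 * th * (th - th^3/6)).
  replace (2 * th * (th - th ^ 3 / 6)) with (th * th * (2 - th^2/3)) by field.
  apply Rmult_le_compat_l. nra. lra.
  apply Rmult_le_compat_l; lra.
Qed.

Lemma Sop_cont_pos p x : cont p -> 0 < x < PI -> continuity_pt (Sop p) x.
Proof.
  intros Hp Hx. unfold Sop. apply (continuity_pt_div (RInt (fp p) 0) sin).
  apply RInt_cont, fp_cont, Hp. apply continuity_sin. apply Rgt_not_eq, sin_gt_0; lra.
Qed.

Lemma T_Inv p : Inv p -> Inv (T p).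
Proof.
  intros Hp. split.
  - intro x. destruct (Rlt_dec 0 x) as [Hx|Hx].
    + unfold T. apply (continuity_pt_comp clip (Sop p)). apply clip_cont.
      apply Sop_cont_pos. apply Hp. pose proof (clip_range x). pose proof PI_gt1.
      split; [|unfold dl in *; lra]. unfold clip, Rmax, Rmin. repeat destruct Rle_dec; unfold dl in *; lra.
    + intros e He. exists (e/2). split. lra. intros y [_ Hy]. simpl in *. unfold R_dist in *.
      unfold T. assert (clip x = 0) by (unfold clip, Rmax, Rmin; repeat destruct Rle_dec; unfold dl in *; lra).
      rewrite H, Sop_0, Rminus_0_r. eapply Rle_lt_trans. apply Sop_bound; auto. apply clip_range.
      assert (clip y <= Rabs (y - x)) by (unfold clip, Rmax, Rmin; repeat destruct Rle_dec; split_Rabs; unfold dl in *; lra).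
      lra.
  - intros th Hth. unfold T. rewrite clip_id by auto. apply Sop_bound; auto.
Qed.

Lemma T_contract f g e : Inv f -> Inv g -> 0 <= e ->
  (forall th, 0 <= th <= dl -> Rabs (f th - g th) <= e) ->
  forall x, Rabs (T f x - T g x) <= e / 2.
Proof.
  intros Hf Hg He H x. unfold T. set (th := clip x). pose proof (clip_range x) as Hth. fold th in Hth.
  destruct (Req_dec th 0) as [->|H0]. rewrite !Sop_0. rewrite Rminus_0_r, Rabs_R0. lra.
  destruct (sin_pos_dl th) as [Hs1 [Hs2 Hs3]]. lra.
  unfold Sop. replace (RInt (fp f) 0 th / sin th - RInt (fp g) 0 th / sin th)
    with ((RInt (fp f) 0 th - RInt (fp g) 0 th) / sin th) by (field; lra).
  apply div_bound; auto.
  replace (RInt (fp f) 0 th - RInt (fp g) 0 th) with (RInt (fun s => fp f s - fp g s) 0 th).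
  2:{ rewrite (RInt_minus (V := R_CompleteNormedModule)); try apply ex_cont, fp_cont; [reflexivity|apply Hf|apply Hg]. }
  eapply Rle_trans. apply RInt_bound with (M := e * (th / 5 + /100)).
  apply cont_minus; apply fp_cont; [apply Hf|apply Hg]. lra.
  - intros s Hs. assert (Hs' : 0 <= s <= dl) by lra.
    pose proof (Inv_small f s Hf Hs'). pose proof (Inv_small g s Hg Hs'). specialize (H s Hs').
    unfold fp. rewrite !E_eq, !D_eq by auto.
    replace (sin s * Er (f s) - cos s * Dr (f s) - (sin s * Er (g s) - cos s * Dr (g s)))
      with (sin s * (Er (f s) - Er (g s)) - cos s * (Dr (f s) - Dr (g s))) by ring.
    eapply Rle_trans. apply Rabs_triang. rewrite Rabs_Ropp, !Rabs_mult.
    pose proof (Er_lip _ _ H1 H2). pose proof (Dr_lip _ _ H1 H2).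
    assert (Rabs (sin s) <= th).
    { destruct (Req_dec s 0) as [->|Hs0]. rewrite sin_0, Rabs_R0; lra.
      destruct (sin_pos_dl s) as [_ [A1 A2]]. lra. rewrite Rabs_right; lra. }
    assert (Rabs (cos s) <= 1) by (pose proof (COS_bound s); split_Rabs; lra).
    assert (Rabs (sin s) * Rabs (Er (f s) - Er (g s)) <= th * (/5 * e)).
    { apply Rmult_le_compat; try apply Rabs_pos; lra. }
    assert (Rabs (cos s) * Rabs (Dr (f s) - Dr (g s)) <= 1 * (/100 * e)).
    { apply Rmult_le_compat; try apply Rabs_pos; lra. }
    lra.
  - unfold dl in *. assert (0 < th) by lra.
    apply Rle_trans with (e/2 * (th - th^3/6)). 2:{ apply Rmult_le_compat_l; lra. }
    replace (th * (e * (th / 5 + / 100))) with (th * e * (th/5 + /100)) by ring.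
    replace (e / 2 * (th - th ^ 3 / 6)) with (th * e * (/2 - th^2/12)) by field.
    apply Rmult_le_compat_l. nra. nra.
Qed.

Fixpoint it (n : nat) : R -> R := match n with O => fun _ => 0 | S n => T (it n) end.

Lemma it_Inv n : Inv (it n).
Proof.
  induction n; simpl. split. intro; apply continuity_pt_const; intros u v; auto.
  intros th Hth. rewrite Rabs_R0; lra. apply T_Inv; auto.
Qed.

Lemma it_step n x : Rabs (it (S n) x - it n x) <= /50 * (/2)^n.
Proof.
  revert x. induction n; intro x.
  - simpl. unfold T. rewrite Rminus_0_r. eapply Rle_trans. apply Sop_bound. apply (it_Inv 0). apply clip_range.
    pose proof (clip_range x). unfold dl in *; lra.
  - change (Rabs (T (it (S n)) x - T (it n) x) <= / 50 * (/ 2) ^ S n).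
    replace (/ 50 * (/ 2) ^ S n) with ((/50 * (/2)^n) / 2) by (simpl; field).
    apply T_contract; try apply it_Inv. apply Rmult_le_pos. lra. apply pow_le; lra.
    intros; apply IHn.
Qed.

Lemma it_diff n k x : Rabs (it (n + k) x - it n x) <= /25 * ((/2)^n - (/2)^(n+k)).
Proof.
  induction k.
  - rewrite Nat.add_0_r. rewrite Rminus_diag, Rabs_R0. lra.
  - replace (n + S k)%nat with (S (n + k)) by lia.
    eapply Rle_trans. replace (it (S (n + k)) x - it n x) with ((it (S (n+k)) x - it (n+k) x) + (it (n+k) x - it n x)) by ring.
    apply Rabs_triang. pose proof (it_step (n+k) x).
    replace ((/2)^(S (n+k))) with (/2 * (/2)^(n+k)) by (simpl; ring). lra.
Qed.

Lemma pow_half_small e : 0 < e -> exists N, forall n, (N <= n)%nat -> (/2)^n < e.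
Proof.
  intros He. destruct (pow_lt_1_zero (/2)) with (y := e) as [N HN]. rewrite Rabs_right; lra. auto.
  exists N. intros n Hn. specialize (HN n Hn). rewrite Rabs_right in HN; auto. apply Rle_ge, pow_le; lra.
Qed.

Lemma it_cauchy x : Cauchy_crit (fun n => it n x).
Proof.
  intros e He. destruct (pow_half_small (e*25)) as [N HN]. lra.
  exists N. intros n m Hn Hm. unfold R_dist.
  assert (forall a b, (N <= a)%nat -> (a <= b)%nat -> Rabs (it b x - it a x) < e).
  { intros a b Ha Hab. replace b with (a + (b - a))%nat by lia.
    eapply Rle_lt_trans. apply it_diff. specialize (HN a Ha).
    assert (0 < (/2)^(a + (b-a))) by (apply pow_lt; lra). lra. }
  destruct (Nat.le_ge_cases n m). rewrite Rabs_minus_sym. apply H; auto. apply H; auto.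
Qed.

Definition pl (x : R) : R := proj1_sig (Rcomplete.R_complete _ (it_cauchy x)).

Lemma pl_close n x : Rabs (pl x - it n x) <= /25 * (/2)^n.
Proof.
  unfold pl. destruct (Rcomplete.R_complete _ (it_cauchy x)) as [l Hl]. simpl.
  apply Rnot_lt_le. intro Hc.
  set (g := Rabs (l - it n x) - /25 * (/2)^n).
  destruct (Hl g) as [N HN]. unfold g; lra.
  specialize (HN (N + n)%nat ltac:(lia)). unfold R_dist in HN.
  replace (N + n)%nat with (n + N)%nat in HN by lia.
  pose proof (it_diff n N x).
  assert (0 < (/2)^(n+N)) by (apply pow_lt; lra).
  assert (Rabs (l - it n x) <= Rabs (it (n+N) x - l) + Rabs (it (n + N) x - it n x)).
  { replace (l - it n x) with (-(it (n+N) x - l) + (it (n+N) x - it n x)) by ring.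
    eapply Rle_trans. apply Rabs_triang. rewrite Rabs_Ropp. lra. }
  unfold g in HN. lra.
Qed.

Lemma le_of_half a b c : 0 <= c -> (forall n, a <= b + c * (/2)^n) -> a <= b.
Proof.
  intros Hc H. apply Rnot_lt_le. intro Hab.
  destruct (Req_dec c 0) as [->|Hc0]. specialize (H O). lra.
  destruct (pow_half_small ((a - b)/c)) as [N HN]. apply Rdiv_lt_0_compat; lra.
  specialize (HN N (le_n _)). specialize (H N).
  assert (c * (/2)^N < a - b). { apply Rmult_lt_reg_l with (/c). apply Rinv_0_lt_compat; lra.
    rewrite <- Rmult_assoc, Rinv_l by lra. replace (/c * (a-b)) with ((a-b)/c) by (unfold Rdiv; ring). lra. }
  lra.
Qed.

Lemma pl_Inv : Inv pl.
Proof.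
  split.
  - intros x e He. destruct (pow_half_small (e*25/3)) as [N HN]. lra. specialize (HN N (le_n _)).
    destruct (proj1 (it_Inv N) x (e/3)) as [a [Ha Hy]]. lra.
    exists a. split; auto. intros y Hyy. specialize (Hy y Hyy). simpl in *. unfold R_dist in *.
    pose proof (pl_close N x). pose proof (pl_close N y).
    replace (pl y - pl x) with ((pl y - it N y) + (it N y - it N x) - (pl x - it N x)) by ring.
    eapply Rle_lt_trans. apply Rabs_triang. eapply Rle_lt_trans. apply Rplus_le_compat_r. apply Rabs_triang.
    rewrite Rabs_Ropp. lra.
  - intros th Hth. apply le_of_half with (c := /25). lra. intro n.
    pose proof (pl_close n th). pose proof (proj2 (it_Inv n) th Hth).
    replace (pl th) with ((pl th - it n th) + it n th) by ring. eapply Rle_trans. apply Rabs_triang. lra.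
Qed.

Lemma pl_fix x : pl x = T pl x.
Proof.
  assert (Rabs (T pl x - pl x) <= 0).
  { apply le_of_half with (c := /25). lra. intro n.
    assert (Rabs (T pl x - it (S n) x) <= (/25 * (/2)^n) / 2).
    { simpl. apply T_contract. apply pl_Inv. apply it_Inv. apply Rmult_le_pos. lra. apply pow_le; lra.
      intros; apply pl_close. }
    pose proof (pl_close (S n) x). assert (/25 * (/2)^(S n) = /25*(/2)^n/2) by (simpl; field).
    replace (T pl x - pl x) with ((T pl x - it (S n) x) - (pl x - it (S n) x)) by ring.
    eapply Rle_trans. apply Rabs_triang. rewrite Rabs_Ropp. lra. }
  pose proof (Rabs_pos (T pl x - pl x)). assert (Rabs (T pl x - pl x) = 0) by lra.
  apply Rabs_eq_0 in H1. lra.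
Qed.

Lemma pl_Sop th : 0 <= th <= dl -> pl th = Sop pl th.
Proof. intros H. rewrite pl_fix. unfold T. rewrite clip_id; auto. Qed.

Lemma pl_0 : pl 0 = 0.
Proof. rewrite pl_Sop. apply Sop_0. unfold dl; lra. Qed.

Lemma pl_RInt th : 0 < th <= dl -> pl th * sin th = RInt (fp pl) 0 th.
Proof.
  intros H. rewrite pl_Sop by lra. unfold Sop. destruct (sin_pos_dl th H) as [_ [Hs _]]. field. lra.
Qed.

Definition pd (th : R) : R := (fp pl th - cos th * pl th) / sin th.

Lemma pl_deriv th : 0 < th < dl -> is_derive pl th (pd th).
Proof.
  intros Hth. destruct (sin_pos_dl th) as [_ [Hs _]]. lra.
  assert (H1 : is_derive (Sop pl) th (pd th)).
  { unfold Sop. 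
    assert (Hd := is_derive_div (RInt (fp pl) 0) sin th _ _ (RInt_deriv (fp pl) th (fp_cont _ (proj1 pl_Inv))) (is_derive_sin th) ltac:(lra)).
    replace (pd th) with ((fp pl th * sin th - RInt (fp pl) 0 th * cos th) / sin th ^ 2). exact Hd.
    rewrite <- pl_RInt by lra. unfold pd. field. lra. }
  apply is_derive_ext_loc with (f := Sop pl); auto.
  assert (Hm : 0 < Rmin th (dl - th)) by (apply Rmin_glb_lt; lra).
  exists (mkposreal _ Hm). intros t Ht. apply ballR in Ht. simpl in Ht.
  pose proof (Rmin_l th (dl - th)). pose proof (Rmin_r th (dl - th)).
  destruct (Rabs_def2 _ _ Ht). symmetry; apply pl_Sop. unfold minus, plus, opp in *; simpl in *. lra.
Qed.

Lemma RInt_sin th : RInt sin 0 th = 1 - cos th.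
Proof.
  apply is_RInt_unique.
  replace (1 - cos th) with (minus ((fun s => - cos s) th) ((fun s => - cos s) 0)).
  2:{ unfold minus, plus, opp; simpl. rewrite cos_0. ring. }
  apply (is_RInt_derive (V := R_CompleteNormedModule) (fun s => - cos s) sin).
  - intros x _. auto_derive; auto. ring.
  - intros x _. apply cont_continuous, continuity_sin.
Qed.

Lemma fp_sin_bound s : 0 <= s <= dl -> Rabs (fp pl s + sin s) <= 56 * s^3.
Proof.
  intros Hs. pose proof (Inv_small pl s pl_Inv Hs) as Hps. pose proof (proj2 pl_Inv s Hs) as H2.
  unfold fp. rewrite E_eq, D_eq by auto.
  pose proof (Er_near _ Hps). pose proof (Dr_small _ Hps).
  assert (Rabs (sin s) <= s).
  { destruct (Req_dec s 0) as [->|Hs0]. rewrite sin_0, Rabs_R0; lra.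
    destruct (sin_pos_dl s) as [_ [A1 A2]]. lra. rewrite Rabs_right; lra. }
  assert ((pl s)^2 <= 4 * s^2). { assert (0 <= s) by lra. split_Rabs; nra. }
  assert (Rabs (pl s) ^ 3 <= 8 * s^3).
  { replace (8 * s^3) with ((2*s)^3) by ring. apply pow_incr. split; [apply Rabs_pos|lra]. }
  assert (Rabs (cos s) <= 1) by (pose proof (COS_bound s); split_Rabs; lra).
  replace (sin s * Er (pl s) - cos s * Dr (pl s) + sin s) with (sin s * (Er (pl s) + 1) - cos s * Dr (pl s)) by ring.
  eapply Rle_trans. apply Rabs_triang. rewrite Rabs_Ropp, !Rabs_mult.
  assert (Rabs (sin s) * Rabs (Er (pl s) + 1) <= s * (4 * (4 * s^2))).
  { apply Rmult_le_compat; try apply Rabs_pos; lra. }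
  assert (Rabs (cos s) * Rabs (Dr (pl s)) <= 1 * (5 * (8 * s^3))).
  { apply Rmult_le_compat; try apply Rabs_pos; lra. }
  lra.
Qed.

Lemma pl_asym th : 0 <= th <= dl -> Rabs (pl th + th/2) <= 58 * th^3.
Proof.
  intros Hth. destruct (Req_dec th 0) as [->|H0]. rewrite pl_0. replace (0+0/2) with 0 by field. rewrite Rabs_R0; lra.
  assert (Hp : 0 < th <= dl) by lra. destruct (sin_pos_dl th Hp) as [Hs1 [Hs2 Hs3]].
  pose proof (pl_RInt th Hp) as HR.
  assert (HR2 : RInt (fp pl) 0 th = RInt (fun s => fp pl s + sin s) 0 th - (1 - cos th)).
  { rewrite <- RInt_sin. 
    rewrite (RInt_plus (V := R_CompleteNormedModule) (fp pl) sin); try apply ex_cont. unfold plus; simpl. set (a := RInt (fp pl) 0 th); set (b := RInt sin 0 th); clearbody a b; simpl in a, b; ring.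
    apply fp_cont, pl_Inv. apply cont_sin. }
  assert (HB : Rabs (RInt (fun s => fp pl s + sin s) 0 th) <= th * (56 * th^3)).
  { apply RInt_bound. apply cont_plus. apply fp_cont, pl_Inv. apply cont_sin. lra.
    intros s Hs. eapply Rle_trans. apply fp_sin_bound. lra. assert (s^3 <= th^3) by (apply pow_incr; lra). lra. }
  unfold dl in *.
  pose proof (cos_lo th ltac:(lra)). pose proof (cos_hi th ltac:(lra)).
  assert (Hk : Rabs (cos th - 1 + th * sin th / 2) <= th^4/12).
  { assert (th * (th - th^3/6) <= th * sin th) by (apply Rmult_le_compat_l; lra).
    assert (th * sin th <= th * th) by (apply Rmult_le_compat_l; lra).
    split_Rabs; nra. }
  assert (Rabs ((pl th + th/2) * sin th) <= (56 + /12) * th^4).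
  { replace ((pl th + th/2) * sin th) with (RInt (fun s => fp pl s + sin s) 0 th + (cos th - 1 + th * sin th / 2)) by (rewrite Rmult_plus_distr_r, HR, HR2; field).
    eapply Rle_trans. apply Rabs_triang. lra. }
  rewrite Rabs_mult, (Rabs_right (sin th)) in H2 by lra.
  assert (Ha : 0 <= Rabs (pl th + th / 2)) by apply Rabs_pos.
  assert (Rabs (pl th + th / 2) * (th - th^3/6) <= (56 + /12) * th^4).
  { eapply Rle_trans. 2: exact H2. apply Rmult_le_compat_l; lra. }
  assert (th^2 <= /10000) by nra.
  apply Rnot_lt_le; intro Hc.
  assert (58 * th^3 * (th - th^3/6) < Rabs (pl th + th / 2) * (th - th^3/6)).
  { apply Rmult_lt_compat_r; try lra. nra. }
  assert (58 * th ^ 3 * (th - th ^ 3 / 6) = th^4 * (58 - 58*th^2/6)) by field.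
  assert (0 < th^4) by (apply pow_lt; lra).
  nra.
Qed.

Lemma pd_bound th : 0 < th < dl -> Rabs (pd th + /2) <= 120 * th^2.
Proof.
  intros Hth. assert (Hs : 0 <= th <= dl) by lra.
  destruct (sin_pos_dl th) as [Hs1 [Hs2 Hs3]]. lra.
  pose proof (Inv_small pl th pl_Inv Hs) as Hps. pose proof (proj2 pl_Inv th Hs) as H2.
  pose proof (pl_asym th Hs) as Has.
  pose proof (Er_near _ Hps). pose proof (Dr_small _ Hps).
  assert ((pl th)^2 <= 4 * th^2). { split_Rabs; nra. }
  assert (Rabs (pl th) ^ 3 <= 8 * th^3).
  { replace (8 * th^3) with ((2*th)^3) by ring. apply pow_incr. split; [apply Rabs_pos|lra]. }
  assert (Rabs (cos th) <= 1) by (pose proof (COS_bound th); split_Rabs; lra).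
  unfold dl in *.
  pose proof (cos_lo th ltac:(lra)). pose proof (cos_hi th ltac:(lra)).
  assert (Hk : Rabs (th * cos th - sin th) <= th^3/2).
  { assert (th * (1 - th^2/2) <= th * cos th) by (apply Rmult_le_compat_l; lra).
    assert (th * cos th <= th * (1 - th ^ 2 / 2 + th ^ 4 / 24)) by (apply Rmult_le_compat_l; lra).
    assert (th^2 <= /10000) by nra. assert (0 < th^3) by (apply pow_lt; lra).
    assert (th^5 <= th^3) by (replace (th^5) with (th^3 * th^2) by ring; nra).
    split_Rabs; nra. }
  assert (HN : Rabs (fp pl th - cos th * pl th + sin th / 2) <= (16 + 40 + 58 + /4) * th^3).
  { unfold fp. rewrite E_eq, D_eq by auto.
    replace (sin th * Er (pl th) - cos th * Dr (pl th) - cos th * pl th + sin th / 2)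
      with (sin th * (Er (pl th) + 1) - cos th * Dr (pl th) - cos th * (pl th + th/2) + (th * cos th - sin th)/2) by field.
    eapply Rle_trans. apply Rabs_triang. eapply Rle_trans. apply Rplus_le_compat_r. apply Rabs_triang.
    eapply Rle_trans. apply Rplus_le_compat_r. apply Rplus_le_compat_r. apply Rabs_triang.
    rewrite !Rabs_Ropp, !Rabs_mult. rewrite (Rabs_right (sin th)) by lra.
    assert (sin th * Rabs (Er (pl th) + 1) <= th * (4 * (4 * th^2))).
    { apply Rmult_le_compat; try apply Rabs_pos; lra. }
    assert (Rabs (cos th) * Rabs (Dr (pl th)) <= 1 * (5 * (8 * th^3))).
    { apply Rmult_le_compat; try apply Rabs_pos; lra. }
    assert (Rabs (cos th) * Rabs (pl th + th / 2) <= 1 * (58 * th^3)).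
    { apply Rmult_le_compat; try apply Rabs_pos; lra. }
    rewrite Rabs_div by lra. rewrite (Rabs_right 2) by lra. lra. }
  replace (pd th + /2) with ((fp pl th - cos th * pl th + sin th / 2) / sin th) by (unfold pd; field; lra).
  apply div_bound; auto.
  assert (th^2 <= /10000) by nra. assert (0 < th^3) by (apply pow_lt; lra).
  apply Rle_trans with (120 * th^2 * (th - th^3/6)). 2:{ apply Rmult_le_compat_l; nra. }
  replace (120 * th ^ 2 * (th - th ^ 3 / 6)) with (th^3 * (120 - 20 * th^2)) by field.
  nra.
Qed.

Lemma pd_neg th : 0 < th < dl -> pd th < 0.
Proof.
  intros H. pose proof (pd_bound th H). unfold dl in H. assert (th^2 <= /10000) by nra. split_Rabs; lra.
Qed.

Lemma pd_cont th : 0 < th < dl -> continuity_pt pd th.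
Proof.
  intros H. destruct (sin_pos_dl th) as [_ [Hs _]]. lra. unfold pd.
  apply (continuity_pt_div (fun t => fp pl t - cos t * pl t) sin).
  apply cont_minus. apply fp_cont, pl_Inv. apply cont_mult. apply cont_cos. apply pl_Inv.
  apply continuity_sin. lra.
Qed.

Lemma pl_decr a b : 0 <= a -> a < b -> b < dl -> pl b < pl a.
Proof.
  intros Ha Hab Hb. destruct (Req_dec a 0) as [->|Ha0].
  - rewrite pl_0. pose proof (pl_asym b ltac:(lra)). unfold dl in *.
    assert (b^2 <= /10000) by nra. assert (58 * b^3 < b/2).
    { replace (58 * b^3) with (b * (58 * b^2)) by ring. nra. }
    split_Rabs; lra.
  - destruct (MVT_gen pl a b pd) as [c [Hc Heq]].
    + intros x Hx. rewrite Rmin_left, Rmax_right in Hx by lra. apply pl_deriv; lra.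
    + intros x Hx. apply pl_Inv.
    + rewrite Rmin_left, Rmax_right in Hc by lra.
      pose proof (pd_neg c ltac:(lra)). nra.
Qed.

Lemma W2 (g : R -> R) (P : R -> Prop) L :
  (forall eps, 0 < eps -> exists eta, 0 < eta /\ forall h, P h -> Rabs h < eta -> Rabs (g h - L) < eps) ->
  filterlim g (within P (locally 0)) (locally L).
Proof.
  intros H. apply filterlim_locally. intros eps. destruct (H eps (cond_pos eps)) as [eta [Heta H']].
  exists (mkposreal eta Heta). intros y Hy HP. apply ballR. apply ballR in Hy. simpl in Hy.
  apply H'; auto. assert (Hy' : Rabs (y - 0) < eta) by exact Hy. rewrite Rminus_0_r in Hy'. exact Hy'.
Qed.

Lemma W2' (g : R -> R) (P : R -> Prop) L :
  filterlim g (within P (locally 0)) (locally L) ->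
  forall eps, 0 < eps -> exists eta, 0 < eta /\ forall h, P h -> Rabs h < eta -> Rabs (g h - L) < eps.
Proof.
  intros H eps He. apply filterlim_locally with (eps := mkposreal eps He) in H.
  destruct H as [eta Heta]. exists eta. split. apply cond_pos. intros h HP Hh.
  assert (Hb : ball 0 eta h) by (apply ballR; rewrite Rminus_0_r; auto).
  specialize (Heta h Hb HP). apply ballR in Heta. auto.
Qed.

Lemma W3 (g : R -> R) (P : R -> Prop) x :
  (forall eps, 0 < eps -> exists eta, 0 < eta /\ forall y, P y -> Rabs (y - x) < eta -> Rabs (g y - g x) < eps) ->
  filterlim g (within P (locally x)) (locally (g x)).
Proof.
  intros H. apply filterlim_locally. intros eps. destruct (H eps (cond_pos eps)) as [eta [Heta H']].
  exists (mkposreal eta Heta). intros y Hy HP. apply ballR. apply ballR in Hy. simpl in Hy. auto.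
Qed.

Lemma W3' (g : R -> R) (P : R -> Prop) x :
  filterlim g (within P (locally x)) (locally (g x)) ->
  forall eps, 0 < eps -> exists eta, 0 < eta /\ forall y, P y -> Rabs (y - x) < eta -> Rabs (g y - g x) < eps.
Proof.
  intros H eps He. apply filterlim_locally with (eps := mkposreal eps He) in H.
  destruct H as [eta Heta]. exists eta. split. apply cond_pos. intros y HP Hy.
  assert (Hb : ball x eta y) by (apply ballR; auto).
  specialize (Heta y Hb HP). apply ballR in Heta. auto.
Qed.

Lemma W1 (f : R -> R) x l (P : R -> Prop) : is_derive f x l -> (forall h, P h -> h <> 0) ->
  filterlim (fun h => (f (x + h) - f x) / h) (within P (locally 0)) (locally l).
Proof.
  intros Hd HP. apply is_derive_Reals in Hd. apply W2. intros eps He.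
  destruct (Hd eps He) as [del Hdel]. exists del. split. apply cond_pos.
  intros h Hh1 Hh2. apply Hdel; auto.
Qed.

Definition u2f (th : R) : R := if Rle_dec th 0 then -/2 else pd th.
Definition uf (u0 : R) (th : R) : R := u0 + RInt pl 0 th.

Lemma uf_deriv u0 x : is_derive (uf u0) x (pl x).
Proof.
  unfold uf. pose proof (RInt_deriv pl x (proj1 pl_Inv)) as H.
  apply is_derive_Reals. apply is_derive_Reals in H. replace (pl x) with (0 + pl x) by ring.
  apply (derivable_pt_lim_plus (fun _ => u0) (RInt pl 0)). apply derivable_pt_lim_const. exact H.
Qed.

Lemma uf_has u0 : has_deriv_on_Ico dl (uf u0) pl.
Proof. intros x Hx. apply W1. apply uf_deriv. intros h [Hh _]; auto. Qed.

Lemma pl_has : has_deriv_on_Ico dl pl u2f.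
Proof.
  intros x Hx. destruct (Req_dec x 0) as [->|Hx0].
  - unfold u2f. destruct (Rle_dec 0 0); [|lra]. apply W2. intros eps He.
    exists eps. split; auto. intros h [Hh0 Hh] Hhe. rewrite Rplus_0_l in Hh.
    rewrite Rplus_0_l, pl_0, Rminus_0_r.
    assert (0 < h) by lra. pose proof (pl_asym h ltac:(lra)).
    replace (pl h / h - - / 2) with ((pl h + h/2) / h) by (field; lra).
    rewrite Rabs_div by lra. rewrite (Rabs_right h) by lra. apply Rlt_div_l. lra.
    unfold dl in *. rewrite Rabs_right in Hhe by lra.
    assert (58 * h^3 < eps * h).
    { replace (58 * h^3) with (h * (58 * h^2)) by ring. rewrite (Rmult_comm eps). apply Rmult_lt_compat_l. lra. nra. }
    lra.
  - replace (u2f x) with (pd x). apply W1. apply pl_deriv. lra. intros h [Hh _]; auto.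
    unfold u2f. destruct (Rle_dec x 0); auto. lra.
Qed.

Lemma u2f_cont : continuous_on_Ico dl u2f.
Proof.
  intros x Hx. apply W3. intros eps He. destruct (Req_dec x 0) as [->|Hx0].
  - exists (eps/2). split. lra. intros y [Hy1 Hy2] Hy. unfold u2f. destruct (Rle_dec 0 0); [|lra].
    destruct (Rle_dec y 0). rewrite Rminus_diag, Rabs_R0; auto.
    pose proof (pd_bound y ltac:(lra)). rewrite Rminus_0_r, Rabs_right in Hy by lra.
    replace (pd y - - / 2) with (pd y + /2) by ring. unfold dl in *.
    assert (120 * y^2 < eps). { replace (120 * y^2) with (y * (120 * y)) by ring. nra. }
    lra.
  - destruct (pd_cont x ltac:(lra) eps He) as [a [Ha Hc]].
    exists (Rmin a x). split. apply Rmin_glb_lt; lra.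
    intros y [Hy1 Hy2] Hy. pose proof (Rmin_l a x). pose proof (Rmin_r a x).
    unfold u2f. destruct (Rle_dec x 0); [lra|]. destruct (Rle_dec y 0) as [Hy0|Hy0].
    { destruct (Rabs_def2 _ _ Hy). lra. }
    destruct (Req_dec y x) as [->|Hyx]. rewrite Rminus_diag, Rabs_R0; auto.
    apply Hc. split. unfold D_x, no_cond; auto. simpl; unfold R_dist. lra.
Qed.

Lemma pl_ode : ode_on dl pl.
Proof.
  intros t Ht. pose proof (pl_deriv t Ht) as Hd.
  destruct (sin_pos_dl t) as [_ [Hs _]]. lra.
  assert (Hts : 0 <= t <= dl) by lra.
  pose proof (Inv_small pl t pl_Inv Hts) as Hp.
  assert (Hp2 : (pl t)^2 <= /2500) by (apply (abs_small _ (/50)) in Hp; lra).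
  assert (Hex : ex_derive pl t) by (exists (pd t); exact Hd).
  assert (H := Hd). apply is_derive_unique in H.
  auto_derive. repeat split; auto. nra.
  change (Derive (fun x : R => pl x) t) with (Derive pl t). rewrite H.
  unfold pd, fp. rewrite E_eq, D_eq by auto. unfold Er, Dr.
  field. repeat split; nra.
Qed.

Lemma uf_concave u0 : forall x y t, 0 <= x < dl -> 0 <= y < dl -> x <> y -> 0 < t < 1 ->
  t * uf u0 x + (1 - t) * uf u0 y < uf u0 (t * x + (1 - t) * y).
Proof.
  assert (Hmvt : forall a b, a < b -> exists c, uf u0 b - uf u0 a = pl c * (b - a) /\ a < c < b).
  { intros a b Hab. apply MVT_cor2; auto. intros c _. apply is_derive_Reals, uf_deriv. }
  assert (key : forall x y t, 0 <= x < dl -> 0 <= y < dl -> x < y -> 0 < t < 1 ->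
      t * uf u0 x + (1 - t) * uf u0 y < uf u0 (t * x + (1 - t) * y)).
  { intros x y t Hx Hy Hxy Ht. set (z := t * x + (1 - t) * y).
    assert (x < z < y) by (unfold z; nra).
    destruct (Hmvt x z) as [c1 [E1 H1]]; try lra.
    destruct (Hmvt z y) as [c2 [E2 H2]]; try lra.
    assert (pl c2 < pl c1) by (apply pl_decr; lra).
    assert (z - x = (1 - t) * (y - x)) by (unfold z; ring).
    assert (y - z = t * (y - x)) by (unfold z; ring).
    assert (t * (uf u0 x - uf u0 z) + (1 - t) * (uf u0 y - uf u0 z) < 0).
    { replace (t * (uf u0 x - uf u0 z) + (1 - t) * (uf u0 y - uf u0 z))
        with (t * (1 - t) * (y - x) * (pl c2 - pl c1)) by (rewrite <- (Ropp_involutive (uf u0 x - uf u0 z));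
          replace (- (uf u0 x - uf u0 z)) with (uf u0 z - uf u0 x) by ring; rewrite E1, E2; nra).
      assert (0 < t * (1 - t) * (y - x)) by (apply Rmult_lt_0_compat; nra).
      nra. }
    lra. }
  intros x y t Hx Hy Hxy Ht. destruct (Rlt_or_le x y) as [H|H].
  - apply key; auto.
  - replace (t * x + (1 - t) * y) with ((1 - t) * y + (1 - (1 - t)) * x) by ring.
    replace (t * uf u0 x + (1 - t) * uf u0 y) with ((1 - t) * uf u0 y + (1 - (1 - t)) * uf u0 x) by ring.
    apply key; lra.
Qed.

Lemma uf_asym u0 : exists C eps : R, 0 < eps /\
       forall th, 0 <= th < dl -> th < eps ->
         Rabs (uf u0 th - (u0 - th ^ 2 / 4)) <= C * th ^ 4.
Proof.
  exists 58, 1. split. lra. intros th Hth _.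
  assert (Hc : cont (fun s : R => s / 2)).
  { apply (lip_cont _ (/2)). lra. intros x y. replace (x/2 - y/2) with (/2 * (x - y)) by field.
    rewrite Rabs_mult, Rabs_right by lra. lra. }
  assert (HR : RInt (fun s => s / 2) 0 th = th^2/4).
  { apply is_RInt_unique.
    replace (th^2/4) with (minus ((fun s => s^2/4) th) ((fun s => s^2/4) 0)) by (unfold minus, plus, opp; simpl; field).
    apply (is_RInt_derive (V := R_CompleteNormedModule) (fun s => s^2/4) (fun s => s/2)).
    - intros x _. auto_derive; auto. field.
    - intros x _. apply cont_continuous, Hc. }

  assert (Heq : uf u0 th - (u0 - th ^ 2 / 4) = RInt (fun s => pl s + s / 2) 0 th).
  { rewrite (RInt_plus (V := R_CompleteNormedModule) pl (fun s => s/2)); try apply ex_cont; auto. 2: apply pl_Inv.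
    unfold plus; simpl. rewrite HR. unfold uf. set (a := RInt pl 0 th). clearbody a. field. }
  rewrite Heq. replace (58 * th^4) with (th * (58 * th^3)) by ring.
  apply RInt_bound. apply cont_plus; auto. apply pl_Inv. lra.
  intros s Hs. eapply Rle_trans. apply pl_asym. lra. assert (s^3 <= th^3) by (apply pow_incr; lra). lra.
Qed.

Definition hh (y : R) : R := y / (1 + y^2)^2.
Definition kk (y : R) : R := (y^2 - 1) / (1 + y^2)^2.

Lemma hh_lower a b : Rabs a <= 3/10 -> Rabs b <= 3/10 -> Rabs (a - b) <= 2 * Rabs (hh a - hh b).
Proof.
  intros Ha Hb. pose proof (abs_small _ _ Ha). pose proof (abs_small _ _ Hb).
  assert (Hab : Rabs (a*b) <= 9/100) by (rewrite Rabs_mult; assert (0<=Rabs a) by apply Rabs_pos; assert (0<=Rabs b) by apply Rabs_pos; nra).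
  assert (a*b <= 9/100 /\ -(9/100) <= a*b) by (split_Rabs; lra).
  assert (0 <= a^2*b^2) by nra.
  assert (a^2*b^2 <= 81/10000) by (replace (a^2*b^2) with ((a*b)*(a*b)) by ring; nra).
  set (N := 1 - 2*a*b - a*b*(a^2 + a*b + b^2)).
  set (den := (1 + a^2)^2 * (1 + b^2)^2).
  assert (Hden1 : 1 <= den) by (unfold den; nra).
  assert (Hden2 : den <= (1 + 9/100)^4).
  { unfold den. assert ((1+a^2)^2 <= (1+9/100)^2) by nra. assert ((1+b^2)^2 <= (1+9/100)^2) by nra.
    replace ((1 + 9/100)^4) with ((1+9/100)^2 * (1+9/100)^2) by ring.
    apply Rmult_le_compat; nra. }
  assert (HN : 79/100 <= N).
  { unfold N. assert (Rabs (a * b * (a ^ 2 + a * b + b ^ 2)) <= 9/100 * (27/100)).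
    { rewrite Rabs_mult. apply Rmult_le_compat; try apply Rabs_pos; auto. rewrite Rabs_right by nra. nra. }
    split_Rabs; nra. }
  replace (hh a - hh b) with ((a - b) * (N / den)) by (unfold hh, N, den; field; nra).
  rewrite Rabs_mult. rewrite (Rabs_right (N/den)).
  2:{ apply Rle_ge, Rdiv_le_0_compat; lra. }
  assert (N / den >= /2).
  { apply Rle_ge. apply Rle_div_r. lra. nra. }
  assert (0 <= Rabs (a - b)) by apply Rabs_pos. nra.
Qed.

Lemma kk_lip a b : Rabs a <= 3/10 -> Rabs b <= 3/10 -> Rabs (kk a - kk b) <= 4 * Rabs (hh a - hh b).
Proof.
  intros Ha Hb. pose proof (hh_lower a b Ha Hb). pose proof (abs_small _ _ Ha). pose proof (abs_small _ _ Hb).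
  assert (Rabs (kk a - kk b) <= 2 * Rabs (a - b)).
  { set (den := (1 + a^2)^2 * (1 + b^2)^2).
    assert (Hden1 : 1 <= den) by (unfold den; nra).
    replace (kk a - kk b) with ((a - b) * ((a + b) * (3 + a^2 + b^2 - a^2*b^2) / den)) by (unfold kk, den; field; nra).
    rewrite Rabs_mult, Rmult_comm. apply Rmult_le_compat_r. apply Rabs_pos.
    rewrite Rabs_div by lra. rewrite (Rabs_right den) by lra. apply Rle_div_l. lra.
    rewrite Rabs_mult. assert (Rabs (a+b) <= 6/10) by (split_Rabs; lra).
    assert (0 <= a^2 * b^2) by nra.
    rewrite (Rabs_right (3 + a ^ 2 + b ^ 2 - a ^ 2 * b ^ 2)) by nra.
    assert (0 <= Rabs (a+b)) by apply Rabs_pos. nra. }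
  lra.
Qed.

Lemma hh_bound y : Rabs (hh y) <= Rabs y.
Proof.
  unfold hh. rewrite Rabs_div by nra. rewrite (Rabs_right ((1 + y ^ 2) ^ 2)) by nra.
  apply Rle_div_l. nra. assert (0 <= Rabs y) by apply Rabs_pos. assert (1 <= (1+y^2)^2) by nra.
  rewrite <- (Rmult_1_r (Rabs y)) at 1. apply Rmult_le_compat_l; lra.
Qed.

Lemma gronwall (v1 : R -> R) (T0 : R) : T0 <= dl -> ode_on dl v1 ->
  (forall s, 0 <= s < T0 -> Rabs (v1 s) <= 3/10) -> forall s, 0 < s < T0 -> v1 s = pl s.
Proof.
  intros HT Hode Hb.
  set (w := fun s => sin s * v1 s / (1 + v1 s ^ 2) ^ 2 - sin s * pl s / (1 + pl s ^ 2) ^ 2).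
  assert (Hw : forall s, w s = sin s * (hh (v1 s) - hh (pl s))) by (intro s; unfold w, hh; field; split; nra).
  assert (Hpb : forall s, 0 <= s <= dl -> Rabs (pl s) <= 3/10).
  { intros s Hs. pose proof (Inv_small pl s pl_Inv Hs). lra. }
  assert (Hwd : forall s, 0 < s < T0 -> is_derive w s (sin s * (kk (v1 s) - kk (pl s)))).
  { intros s Hs. unfold w. replace (sin s * (kk (v1 s) - kk (pl s))) with
      (sin s * ((v1 s)^2 - 1) / (1 + (v1 s)^2)^2 - sin s * ((pl s)^2 - 1) / (1 + (pl s)^2)^2)
      by (unfold kk; field; split; nra).
    apply (is_derive_minus (fun s => sin s * v1 s / (1 + v1 s ^ 2) ^ 2) (fun s => sin s * pl s / (1 + pl s ^ 2) ^ 2)).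
    apply Hode; lra. apply pl_ode; lra. }
  set (g := fun s => exp (-8 * s) * (w s)^2).
  assert (Hgd : forall s, 0 < s < T0 -> is_derive g s (exp (-8*s) * (-8 * (w s)^2 + 2 * w s * (sin s * (kk (v1 s) - kk (pl s)))))).
  { intros s Hs. unfold g. pose proof (Hwd s Hs) as Hd.
    assert (Hex : ex_derive w s) by (eexists; exact Hd).
    apply is_derive_unique in Hd.
    auto_derive. exact Hex. change (Derive (fun x => w x) s) with (Derive w s). rewrite Hd. ring. }
  assert (Hgneg : forall s, 0 < s < T0 -> exp (-8*s) * (-8 * (w s)^2 + 2 * w s * (sin s * (kk (v1 s) - kk (pl s)))) <= 0).
  { intros s Hs. assert (Hsd : 0 <= s <= dl) by lra.
    destruct (sin_pos_dl s) as [_ [Hs2 _]]. lra.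
    pose proof (kk_lip (v1 s) (pl s) (Hb s ltac:(lra)) (Hpb s Hsd)).
    assert (Rabs (sin s * (kk (v1 s) - kk (pl s))) <= 4 * Rabs (w s)).
    { rewrite Hw, !Rabs_mult, (Rabs_right (sin s)) by lra. nra. }
    assert (2 * w s * (sin s * (kk (v1 s) - kk (pl s))) <= 8 * (w s)^2).
    { assert (Rabs (2 * w s * (sin s * (kk (v1 s) - kk (pl s)))) <= 8 * (w s)^2).
      { set (X := sin s * (kk (v1 s) - kk (pl s))) in *. rewrite !Rabs_mult, (Rabs_right 2) by lra. assert (0 <= Rabs (w s)) by apply Rabs_pos.
        replace ((w s)^2) with (Rabs (w s) * Rabs (w s)) by (rewrite <- Rabs_mult; rewrite Rabs_right; [ring|nra]). nra. }
      split_Rabs; lra. }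
    pose proof (exp_pos (-8*s)). nra. }
  assert (Hmono : forall a b, 0 < a -> a < b -> b < T0 -> g b <= g a).
  { intros a b Ha Hab HbT. destruct (MVT_gen g a b (fun s => exp (-8 * s) * (-8 * w s ^ 2 + 2 * w s * (sin s * (kk (v1 s) - kk (pl s)))))) as [c [Hc Heq]].
    - intros x Hx. rewrite Rmin_left, Rmax_right in Hx by lra. apply Hgd; lra.
    - intros x Hx. rewrite Rmin_left, Rmax_right in Hx by lra. apply derivable_continuous_pt.
      eexists. apply is_derive_Reals, Hgd. lra.
    - rewrite Rmin_left, Rmax_right in Hc by lra. pose proof (Hgneg c ltac:(lra)). nra. }
  assert (Hsmall : forall a, 0 < a < T0 -> g a <= 36/100 * a^2).
  { intros a Ha. unfold g. destruct (sin_pos_dl a) as [_ [Hs2 Hs3]]. lra.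
    rewrite Hw. pose proof (hh_bound (v1 a)). pose proof (hh_bound (pl a)).
    pose proof (Hb a ltac:(lra)). pose proof (Hpb a ltac:(lra)).
    assert (Rabs (sin a * (hh (v1 a) - hh (pl a))) <= a * (6/10)).
    { rewrite Rabs_mult, (Rabs_right (sin a)) by lra. apply Rmult_le_compat; try lra. apply Rabs_pos.
      eapply Rle_trans. apply Rabs_triang. rewrite Rabs_Ropp. lra. }
    assert (exp (-8 * a) <= 1). { rewrite <- exp_0. left. apply exp_increasing. lra. }
    assert (0 < exp (-8 * a)) by apply exp_pos.
    assert ((sin a * (hh (v1 a) - hh (pl a)))^2 <= (a * (6/10))^2).
    { rewrite <- pow2_abs. apply pow_incr. split; [apply Rabs_pos|assumption]. }
    assert (0 <= (sin a * (hh (v1 a) - hh (pl a)))^2) by apply pow2_ge_0.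
    apply Rle_trans with (1 * (a * (6/10))^2). apply Rmult_le_compat; lra. nra. }
  intros s Hs.
  assert (Hg0 : g s <= 0).
  { apply Rnot_lt_le. intro Hgs. set (a := Rmin (s/2) (g s / s)).
    assert (0 < a) by (apply Rmin_glb_lt; [lra|apply Rdiv_lt_0_compat; lra]).
    assert (a <= s/2) by apply Rmin_l. assert (a <= g s / s) by apply Rmin_r.
    pose proof (Hmono a s ltac:(lra) ltac:(lra) ltac:(lra)). pose proof (Hsmall a ltac:(lra)).
    assert (a * s <= g s) by (apply Rle_div_r in H1; lra).
    nra. }
  assert (Hws : w s = 0).
  { unfold g in Hg0. pose proof (exp_pos (-8*s)). assert ((w s)^2 <= 0) by nra. nra. }
  rewrite Hw in Hws. destruct (sin_pos_dl s) as [_ [Hs2 _]]. lra.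
  assert (hh (v1 s) = hh (pl s)) by (apply Rmult_integral in Hws; destruct Hws; lra).
  pose proof (hh_lower (v1 s) (pl s) (Hb s ltac:(lra)) (Hpb s ltac:(lra))).
  rewrite H, Rminus_diag, Rabs_R0 in H0. assert (Rabs (v1 s - pl s) = 0) by (pose proof (Rabs_pos (v1 s - pl s)); lra).
  apply Rabs_eq_0 in H1. lra.
Qed.

Lemma deriv_cont d f f' x : has_deriv_on_Ico d f f' -> 0 <= x < d ->
  forall eps, 0 < eps -> exists eta, 0 < eta /\ forall y, 0 <= y < d -> Rabs (y - x) < eta -> Rabs (f y - f x) < eps.
Proof.
  intros Hd Hx eps He. destruct (W2' _ _ _ (Hd x Hx) 1 Rlt_0_1) as [e1 [He1 H1]].
  set (M := Rabs (f' x) + 1).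
  assert (HM : 0 < M) by (unfold M; pose proof (Rabs_pos (f' x)); lra).
  exists (Rmin e1 (eps / M)). split. apply Rmin_glb_lt; auto. apply Rdiv_lt_0_compat; lra.
  intros y Hy Hyx. pose proof (Rmin_l e1 (eps/M)). pose proof (Rmin_r e1 (eps/M)).
  destruct (Req_dec y x) as [->|Hne]. rewrite Rminus_diag, Rabs_R0; auto.
  specialize (H1 (y - x)). replace (x + (y - x)) with y in H1 by ring.
  assert (Hq : Rabs ((f y - f x) / (y - x) - f' x) < 1) by (apply H1; [split; [lra|lra]|lra]).
  assert (Hyx0 : 0 < Rabs (y - x)) by (apply Rabs_pos_lt; lra).
  assert (Rabs ((f y - f x) / (y - x)) <= M).
  { unfold M. replace ((f y - f x) / (y - x)) with (((f y - f x) / (y - x) - f' x) + f' x) by ring.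
    eapply Rle_trans. apply Rabs_triang. lra. }
  replace (f y - f x) with ((f y - f x) / (y - x) * (y - x)) by (field; lra).
  rewrite Rabs_mult. apply Rle_lt_trans with (M * Rabs (y - x)).
  apply Rmult_le_compat_r. apply Rabs_pos. auto.
  apply Rlt_le_trans with (M * (eps / M)). apply Rmult_lt_compat_l; lra. right; field; lra.
Qed.

Lemma interior_deriv d f f' x : has_deriv_on_Ico d f f' -> 0 < x < d -> is_derive f x (f' x).
Proof.
  intros Hd Hx. apply is_derive_Reals. intros eps He.
  destruct (W2' _ _ _ (Hd x ltac:(lra)) eps He) as [e1 [He1 H1]].
  assert (Hm : 0 < Rmin e1 (Rmin x (d - x))) by (repeat apply Rmin_glb_lt; lra).
  exists (mkposreal _ Hm). intros h Hh0 Hh. simpl in Hh.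
  pose proof (Rmin_l e1 (Rmin x (d - x))). pose proof (Rmin_r e1 (Rmin x (d - x))).
  pose proof (Rmin_l x (d - x)). pose proof (Rmin_r x (d - x)).
  apply H1. split; auto. destruct (Rabs_def2 _ _ Hh). lra. lra.
Qed.

Lemma unique_v1 v1 v2 : has_deriv_on_Ico dl v1 v2 -> v1 0 = 0 -> ode_on dl v1 ->
  forall x, 0 <= x < dl -> v1 x = pl x.
Proof.
  intros Hd H0 Hode x Hx.
  set (A := fun t => 0 <= t <= x /\ forall s, 0 <= s <= t -> Rabs (v1 s) <= 3/10).
  assert (HA0 : A 0). { split. lra. intros s Hs. replace s with 0 by lra. rewrite H0, Rabs_R0; lra. }
  assert (Hbd : bound A). { exists x. intros t [Ht _]. lra. }
  destruct (completeness A Hbd (ex_intro _ 0 HA0)) as [T [HTub HTl]].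
  assert (HT0 : 0 <= T) by (apply HTub; auto).
  assert (HTx : T <= x). { apply HTl. intros t [Ht _]. lra. }
  assert (Hi : forall s, 0 <= s < T -> Rabs (v1 s) <= 3/10).
  { intros s Hs. apply Rnot_lt_le. intro Hc.
    assert (T <= s). { apply HTl. intros t [Ht1 Ht2]. apply Rnot_lt_le. intro Hts.
      specialize (Ht2 s ltac:(lra)). lra. }
    lra. }
  assert (Hii : forall s, 0 < s < T -> v1 s = pl s).
  { apply gronwall; auto. lra. }
  assert (Hiii : v1 T = pl T).
  { destruct (Req_dec T 0) as [->|HTn0]. rewrite H0, pl_0; auto.
    assert (Rabs (v1 T - pl T) <= 0).
    { apply Rnot_lt_le. intro Hc. set (e := Rabs (v1 T - pl T) / 2).
      destruct (deriv_cont dl v1 v2 T Hd ltac:(lra) e ltac:(unfold e; lra)) as [a [Ha Hv]].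
      destruct (proj1 pl_Inv T e ltac:(unfold e; lra)) as [b [Hb Hp]].
      set (s := T - Rmin (T/2) (Rmin (a/2) (b/2))).
      assert (0 < Rmin (T/2) (Rmin (a/2) (b/2))) by (repeat apply Rmin_glb_lt; lra).
      pose proof (Rmin_l (T/2) (Rmin (a/2) (b/2))). pose proof (Rmin_r (T/2) (Rmin (a/2) (b/2))).
      pose proof (Rmin_l (a/2) (b/2)). pose proof (Rmin_r (a/2) (b/2)).
      assert (0 < s < T) by (unfold s; lra).
      specialize (Hv s ltac:(lra)). rewrite Rabs_minus_sym in Hv. assert (Rabs (T - s) < a) by (rewrite Rabs_right; unfold s; lra).
      specialize (Hv H6).
      assert (Hps : Rabs (pl s - pl T) < e).
      { destruct (Req_dec s T). lra. apply Hp. split. unfold D_x, no_cond; auto. simpl; unfold R_dist.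
        rewrite Rabs_left; unfold s; lra. }
      rewrite (Hii s H5) in Hv.
      assert (Rabs (v1 T - pl T) <= Rabs (v1 T - pl s) + Rabs (pl s - pl T)).
      { replace (v1 T - pl T) with ((v1 T - pl s) + (pl s - pl T)) by ring. apply Rabs_triang. }
      rewrite Rabs_minus_sym in Hv. unfold e in *. lra. }
    pose proof (Rabs_pos (v1 T - pl T)). assert (Rabs (v1 T - pl T) = 0) by lra.
    apply Rabs_eq_0 in H2. lra. }
  assert (HTeq : T = x).
  { apply Rle_antisym; auto. apply Rnot_lt_le. intro HTlt.
    destruct (deriv_cont dl v1 v2 T Hd ltac:(lra) (/10) ltac:(lra)) as [a [Ha Hv]].
    assert (HvT : Rabs (v1 T) <= /50). { rewrite Hiii. apply (Inv_small pl T pl_Inv). lra. }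
    set (t' := Rmin (T + a/2) x).
    assert (At' : A t').
    { split. unfold t'. pose proof (Rmin_r (T + a/2) x). split; [|lra].
      apply Rmin_glb; lra.
      intros s Hs. destruct (Rlt_or_le s T). apply Hi; lra.
      assert (t' <= T + a/2) by apply Rmin_l. assert (t' <= x) by apply Rmin_r.
      assert (Rabs (v1 s - v1 T) < /10) by (apply Hv; [lra| rewrite Rabs_right; lra]).
      assert (Rabs (v1 s) <= Rabs (v1 s - v1 T) + Rabs (v1 T)).
      { replace (v1 s) with ((v1 s - v1 T) + v1 T) at 1 by ring. apply Rabs_triang. }
      lra. }
    pose proof (HTub t' At'). unfold t' in H.
    assert (T < Rmin (T + a/2) x) by (apply Rmin_glb_lt; lra). lra. }
  rewrite <- HTeq. auto.
Qed.

Lemma const_of_zero_deriv d (w : R -> R) : 0 < d -> has_deriv_on_Ico d w (fun _ => 0) ->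
  forall x, 0 <= x < d -> w x = w 0.
Proof.
  intros Hd0 Hd.
  assert (Hmid : forall a b, 0 < a -> a < b -> b < d -> w b = w a).
  { intros a b Ha Hab Hb. destruct (MVT_gen w a b (fun _ => 0)) as [c [_ Heq]].
    - intros y Hy. rewrite Rmin_left, Rmax_right in Hy by lra. apply (interior_deriv d w (fun _ => 0)); auto. lra.
    - intros y Hy. rewrite Rmin_left, Rmax_right in Hy by lra. apply derivable_continuous_pt.
      exists 0. apply is_derive_Reals. apply (interior_deriv d w (fun _ => 0)); auto. lra.
    - lra. }
  intros x Hx. destruct (Req_dec x 0) as [->|Hx0]; auto.
  assert (Rabs (w x - w 0) <= 0).
  { apply Rnot_lt_le. intro Hc.
    destruct (deriv_cont d w (fun _ => 0) 0 Hd ltac:(lra) _ Hc) as [a [Ha Hv]].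
    set (s := Rmin (a/2) (x/2)).
    assert (0 < s) by (apply Rmin_glb_lt; lra). assert (s <= a/2) by apply Rmin_l. assert (s <= x/2) by apply Rmin_r.
    assert (Hs : Rabs (w s - w 0) < Rabs (w x - w 0)) by (apply Hv; [lra|rewrite Rminus_0_r, Rabs_right; lra]).
    rewrite <- (Hmid s x) in Hs; lra. }
  pose proof (Rabs_pos (w x - w 0)). assert (Rabs (w x - w 0) = 0) by lra. apply Rabs_eq_0 in H1. lra.
Qed.

Theorem theorem3p8 :
  forall u0 : R,
  exists d : R, 0 < d /\
  exists u u1 u2 : R -> R,
    C2_Ico d u u1 u2 /\ u 0 = u0 /\ u1 0 = 0 /\ ode_on d u1 /\
    (forall v : R -> R, is_solution u0 d v ->
       forall x, 0 <= x < d -> v x = u x) /\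
    u2 0 = - / 2 /\
    (forall x y t, 0 <= x < d -> 0 <= y < d -> x <> y -> 0 < t < 1 ->
       t * u x + (1 - t) * u y < u (t * x + (1 - t) * y)) /\
    (exists C eps : R, 0 < eps /\
       forall th, 0 <= th < d -> th < eps ->
         Rabs (u th - (u0 - th ^ 2 / 4)) <= C * th ^ 4).
Proof.
  intros u0. exists dl. split. apply dl_pos.
  exists (uf u0), pl, u2f.
  split. { split. apply uf_has. split. apply pl_has. apply u2f_cont. }
  split. { unfold uf. rewrite RInt_point. unfold zero; simpl. ring. }
  split. apply pl_0.
  split. apply pl_ode.
  split.
  { intros v [v1 [v2 [[Hv [Hv1 _]] [Hv0 [Hv10 Hode]]]]] x Hx.
    set (w := fun t => v t - uf u0 t).
    assert (Hw : has_deriv_on_Ico dl w (fun _ => 0)).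
    { intros y Hy. pose proof (Hv y Hy) as H1. pose proof (uf_has u0 y Hy) as H2.
      apply W2. intros eps He.
      destruct (W2' _ _ _ H1 (eps/2) ltac:(lra)) as [a [Ha Ha']].
      destruct (W2' _ _ _ H2 (eps/2) ltac:(lra)) as [b [Hb Hb']].
      exists (Rmin a b). split. apply Rmin_glb_lt; auto. intros h Hh Hhab.
      pose proof (Rmin_l a b). pose proof (Rmin_r a b).
      specialize (Ha' h Hh ltac:(lra)). specialize (Hb' h Hh ltac:(lra)).
      rewrite (unique_v1 v1 v2 Hv1 Hv10 Hode y Hy) in Ha'.
      unfold w. replace ((v (y + h) - uf u0 (y + h) - (v y - uf u0 y)) / h - 0)
        with (((v (y + h) - v y) / h - pl y) - ((uf u0 (y + h) - uf u0 y) / h - pl y)) by (field; tauto).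
      eapply Rle_lt_trans. apply Rabs_triang. rewrite Rabs_Ropp. lra. }
    pose proof (const_of_zero_deriv dl w dl_pos Hw x Hx). unfold w in H.
    assert (uf u0 0 = u0) by (unfold uf; rewrite RInt_point; unfold zero; simpl; ring).
    lra. }
  split. { unfold u2f. destruct (Rle_dec 0 0); auto. lra. }
  split. apply uf_concave.
  apply uf_asym.
Qed.
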